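(* Let $F$, $G$, $\Sigma_A$, $\pi$, $C$, $R$ be as in the context. For $\omega\in\Sigma_A$ let $I_\omega:=\bigcap_{n\ge1}g_{\omega_{-1}}\circ\cdots\circ g_{\omega_{-n}}(I)$ and for $\xi\in\Sigma_N$ let $I_\xi:=\bigcap_{n\ge1}f_{\xi_{-1}}\circ\cdots\circ f_{\xi_{-n}}(I)$. Then $I_\omega=I_{\pi(\omega)}$ for every $\omega\in C$ and $I_\omega=R(I_{\pi(\omega)})$ for every $\omega\in\Sigma_A\setminus C$.
   Context: $I=[0,1]$, $R(x)=1-x$. $F(\xi,p)=(\sigma(\xi),f_{\xi_0}(p))$ on $\Sigma_N\times I$, $\Sigma_N=\{1,\ldots,N\}^{\mathbb Z}$, with $f_i$ $C^1$-diffeomorphisms onto their images. $\mathcal I_P$ / $\mathcal I_R$: indices of orientation preserving / reversing $f_i$. $A=(a_{ij})_{i,j=1}^{2N}$ with $a_{ij}=1$ if ($i\in\mathcal I_P$, $j\le N$), or ($i\in\mathcal I_R$, $j>N$), or ($i-N\in\mathcal I_P$, $j>N$), or ($i-N\in\mathcal I_R$, $j\le N$), else $0$; $\Sigma_A$ the $A$-admissible bi-infinite sequences in $\{1,\ldots,2N\}$ with shift $\sigma_A$; $\pi(\omega)_n=\overline{\omega_n}$ where $\overline i=i$ for $i\le N$, $\overline i=i-N$ for $i>N$. $G(\omega,x)=(\sigma_A(\omega),g_{\omega_0}(x))$ with $g_i=f_i$, $g_{i+N}=R\circ f_i\circ R$ for $i\in\mathcal I_P$, and $g_i=R\circ f_i$,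 $g_{i+N}=f_i\circ R$ for $i\in\mathcal I_R$. $C=\{\omega\in\Sigma_A\colon\omega_0\le N\}$. *)

(* Defs.v *)
From Stdlib Require Import Reals Lra Lia ZArith Arith ClassicalEpsilon.
Open Scope R_scope.

Definition inI (x : R) : Prop := 0 <= x <= 1.

Definition Rfl (x : R) : R := 1 - x.

(* f is a C^1 diffeomorphism of I onto its image f(I), with f(I) included in I:
   f maps I into I, is injective on I, has a derivative df (one-sided at the
   endpoints, i.e. the limit of difference quotients taken within I) which is
   continuous on I and nowhere zero on I (so the inverse is C^1 as well). *)
Definition C1_diffeo_into_I (f : R -> R) : Prop :=
  (forall x, inI x -> inI (f x)) /\
  (forall x y, inI x -> inI y -> f x = f y -> x = y) /\
  exists df : R -> R,
    (forall x, inI x ->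
       limit1_in (fun y => (f y - f x) / (y - x)) (fun y => inI y /\ y <> x) (df x) x) /\
    (forall x, inI x -> limit1_in df inI (df x) x) /\
    (forall x, inI x -> df x <> 0).

Definition orient_pres (f : R -> R) : Prop :=
  forall x y, inI x -> inI y -> x < y -> f x < f y.
Definition orient_rev (f : R -> R) : Prop :=
  forall x y, inI x -> inI y -> x < y -> f y < f x.

Definition inIP (N : nat) (f : nat -> R -> R) (i : nat) : Prop :=
  (1 <= i <= N)%nat /\ orient_pres (f i).
Definition inIR (N : nat) (f : nat -> R -> R) (i : nat) : Prop :=
  (1 <= i <= N)%nat /\ orient_rev (f i).

(* the transition matrix A, entries a_{ij} = 1, for i, j in {1,...,2N} *)
Definition a_one (N : nat) (f : nat -> R -> R) (i j : nat) : Prop :=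
  (1 <= i <= 2 * N)%nat /\ (1 <= j <= 2 * N)%nat /\
  ( (inIP N f i /\ (j <= N)%nat)
  \/ (inIR N f i /\ (N < j)%nat)
  \/ ((N < i)%nat /\ inIP N f (i - N) /\ (N < j)%nat)
  \/ ((N < i)%nat /\ inIR N f (i - N) /\ (j <= N)%nat)).

Definition in_SigmaN (N : nat) (xi : Z -> nat) : Prop :=
  forall n : Z, (1 <= xi n <= N)%nat.

Definition in_SigmaA (N : nat) (f : nat -> R -> R) (w : Z -> nat) : Prop :=
  forall n : Z, a_one N f (w n) (w (n + 1)%Z).

Definition bar (N i : nat) : nat := if Nat.leb i N then i else (i - N)%nat.
Definition pi_proj (N : nat) (w : Z -> nat) : Z -> nat := fun n => bar N (w n).

Definition g_map (N : nat) (f : nat -> R -> R) (i : nat) : R -> R :=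
  if Nat.leb i N then
    (if excluded_middle_informative (orient_pres (f i))
     then f i
     else fun x => Rfl (f i x))
  else
    (if excluded_middle_informative (orient_pres (f (i - N)%nat))
     then fun x => Rfl (f (i - N)%nat (Rfl x))
     else fun x => f (i - N)%nat (Rfl x)).

(* backward composition h_{s_{-1}} o ... o h_{s_{-n}} *)
Fixpoint back_comp (h : nat -> R -> R) (s : Z -> nat) (n : nat) : R -> R :=
  match n with
  | O => fun x => x
  | S m => fun x => back_comp h s m (h (s (- Z.of_nat (S m))%Z) x)
  end.

(* I_s := bigcap_{n >= 1} h_{s_{-1}} o ... o h_{s_{-n}} (I), as a predicate *)
Definition fiber (h : nat -> R -> R) (s : Z -> nat) (x : R) : Prop :=
  forall n : nat, (1 <= n)%nat -> exists y, inI y /\ x = back_comp h s n y.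

(* Main.v *)
Require Import Defs.
From Stdlib Require Import Reals ZArith Arith.
From Stdlib Require Import Lra Lia ClassicalEpsilon.
Open Scope R_scope.

Definition Rb (b : bool) (x : R) : R := if b then Rfl x else x.

Lemma Rb_inv b x : Rb b (Rb b x) = x.
Proof. destruct b; unfold Rb, Rfl; simpl; ring. Qed.

Lemma Rb_I b x : inI x -> inI (Rb b x).
Proof. destruct b; unfold Rb, Rfl, inI; simpl; lra. Qed.

Lemma pres_rev_excl (h : R -> R) : orient_pres h -> orient_rev h -> False.
Proof.
  intros Hp Hr.
  assert (H0 : inI 0) by (unfold inI; lra).
  assert (H1 : inI 1) by (unfold inI; lra).
  specialize (Hp 0 1 H0 H1 ltac:(lra)). specialize (Hr 0 1 H0 H1 ltac:(lra)). lra.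
Qed.

Definition tt_ (N : nat) (w : Z -> nat) (k : Z) : bool := negb (Nat.leb (w k) N).

Lemma g_step N f w k x : a_one N f (w k) (w (k + 1)%Z) ->
  g_map N f (w k) x = Rb (tt_ N w (k+1)%Z) (f (bar N (w k)) (Rb (tt_ N w k) x)).
Proof.
  intros [Hi [Hj H]].
  unfold g_map, tt_, bar, Rb, inIP, inIR in *.
  destruct (Nat.leb (w k) N) eqn:E.
  - apply Nat.leb_le in E.
    destruct (excluded_middle_informative (orient_pres (f (w k)))) as [P|P]; simpl.
    + destruct H as [[[_ A1] B1]|[[[_ A2] B2]|[[C3 [[_ A3] B3]]|[C4 [[_ A4] B4]]]]].
      * replace (Nat.leb (w (k+1)%Z) N) with true by (symmetry; apply Nat.leb_le; lia). reflexivity.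
      * exfalso; apply (pres_rev_excl _ P A2).
      * lia.
      * lia.
    + destruct H as [[[_ A1] B1]|[[[_ A2] B2]|[[C3 [[_ A3] B3]]|[C4 [[_ A4] B4]]]]].
      * exfalso; apply P, A1.
      * replace (Nat.leb (w (k+1)%Z) N) with false by (symmetry; apply Nat.leb_gt; lia). reflexivity.
      * lia.
      * lia.
  - apply Nat.leb_gt in E.
    destruct (excluded_middle_informative (orient_pres (f (w k - N)%nat))) as [P|P]; simpl.
    + destruct H as [[[D1 A1] B1]|[[[D2 A2] B2]|[[C3 [[_ A3] B3]]|[C4 [[_ A4] B4]]]]].
      * lia.
      * lia.
      * replace (Nat.leb (w (k+1)%Z) N) with false by (symmetry; apply Nat.leb_gt; lia). reflexivity.
      * exfalso; apply (pres_rev_excl _ P A4).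
    + destruct H as [[[D1 A1] B1]|[[[D2 A2] B2]|[[C3 [[_ A3] B3]]|[C4 [[_ A4] B4]]]]].
      * lia.
      * lia.
      * exfalso; apply P, A3.
      * replace (Nat.leb (w (k+1)%Z) N) with true by (symmetry; apply Nat.leb_le; lia). reflexivity.
Qed.

Lemma bc_formula N f w : in_SigmaA N f w -> forall n x,
  back_comp (g_map N f) w n x =
  Rb (tt_ N w 0) (back_comp f (pi_proj N w) n (Rb (tt_ N w (- Z.of_nat n)%Z) x)).
Proof.
  intros HA n. induction n as [|m IH]; intro x.
  - simpl. rewrite Rb_inv. reflexivity.
  - cbn [back_comp]. rewrite IH. f_equal.
    rewrite g_step by apply HA.
    replace (- Z.of_nat (S m) + 1)%Z with (- Z.of_nat m)%Z by lia.
    rewrite Rb_inv. reflexivity.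
Qed.

Theorem lemma3p7 (N : nat) (f : nat -> R -> R)
  (hdiff : forall i, (1 <= i <= N)%nat -> C1_diffeo_into_I (f i)) :
  forall w : Z -> nat, in_SigmaA N f w ->
    ((w 0%Z <= N)%nat ->
       forall x, fiber (g_map N f) w x <-> fiber f (pi_proj N w) x) /\
    (~ (w 0%Z <= N)%nat ->
       forall x, fiber (g_map N f) w x <->
         exists y, fiber f (pi_proj N w) y /\ x = Rfl y).
Proof.
  intros w HA. unfold fiber. split.
  - intros H0 x.
    assert (T : tt_ N w 0 = false) by (unfold tt_; apply Nat.leb_le in H0; rewrite H0; reflexivity).
    split; intros H n Hn; destruct (H n Hn) as [y [Hy Hx]].
    + rewrite bc_formula, T in Hx by exact HA. simpl in Hx.
      eexists; split; [apply Rb_I; exact Hy| exact Hx].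
    + exists (Rb (tt_ N w (- Z.of_nat n)%Z) y). split; [apply Rb_I; exact Hy|].
      rewrite bc_formula, T by exact HA. simpl. rewrite Rb_inv. exact Hx.
  - intros H0 x.
    assert (T : tt_ N w 0 = true).
    { unfold tt_. destruct (Nat.leb (w 0%Z) N) eqn:E; [apply Nat.leb_le in E; tauto|reflexivity]. }
    split.
    + intros H. exists (Rfl x). split; [|unfold Rfl; ring].
      intros n Hn; destruct (H n Hn) as [y [Hy Hx]].
      rewrite bc_formula, T in Hx by exact HA. simpl in Hx.
      exists (Rb (tt_ N w (- Z.of_nat n)%Z) y). split; [apply Rb_I; exact Hy|].
      rewrite Hx. unfold Rb, Rfl. ring.
    + intros [z [Hz Hx]] n Hn. destruct (Hz n Hn) as [y [Hy Hz']].
      exists (Rb (tt_ N w (- Z.of_nat n)%Z) y). split; [apply Rb_I; exact Hy|].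
      rewrite bc_formula, T by exact HA. simpl. rewrite Rb_inv. rewrite Hx, Hz'. reflexivity.
Qed.
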